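(* Let $\Phi$ be a channel matrix whose rows $P^1,P^2,P^3\in\Delta^n$ are in general position, let $Q^0$ be the equidistant point from $P^1,P^2,P^3$ and $\boldsymbol\lambda^0$ its barycentric coordinate. Suppose $\lambda^0_1<0$, $\lambda^0_2\ge0$, $\lambda^0_3\ge0$, and let $Q^1=\pi(Q^0|L(P^2,P^3))$. Then the output distribution achieving the channel capacity is $Q^\ast=Q^1$ and the channel capacity is $C=D(P^2\|Q^1)$.
   Context: $\Delta^n=\{Q:Q_j>0,\sum_jQ_j=1\}$, $\bar\Delta^m=\{\boldsymbol\lambda:\lambda_i\ge0,\sum_i\lambda_i=1\}$; $D(Q\|Q')=\sum_jQ_j\log(Q_j/Q'_j)$. Rows are in general position if $P^2-P^1,\dots,P^m-P^1$ are linearly independent. $L(S^1,\dots,S^r)=\{\sum_i\lambda_iS^i:\sum_i\lambda_i=1\}\cap\Delta^n$; for such an affine subspace $L$, $\pi(Q'|L)$ is the unique $Q\in L$ minimizing $D(Q\|Q')$. The barycentric coordinate of $Q\in L(P^1,\dots,P^m)$ is the unique $\boldsymbol\lambda$ with $\sum_i\lambda_i=1$, $Q=\sum_i\lambda_iP^i$. The equidistant point is the unique $Q^0\in L(P^1,\dots,P^m)$ with all $D(P^i\|Q^0)$ equal. Mutual information $I(\boldsymbol\lambda,\Phi)=\sum_{i,j}\lambda_iP^i_j\log(P^i_j/Q_j)$ with $Q=\boldsymbol\lambda\Phi$; capacity $C=\max_{\boldsymbol\lambda\in\bar\Delta^m}I(\boldsymbol\lambda,\Phi)$; the capacity-achieving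 output distribution is $Q^\ast=\boldsymbol\lambda^\ast\Phi$ for a maximizer $\boldsymbol\lambda^\ast$ (unique). *)

(* Defs.v *)
From HB Require Import structures.
From mathcomp Require Import all_boot all_order all_algebra.
From mathcomp Require Import reals exp.
Set Implicit Arguments. Unset Strict Implicit. Unset Printing Implicit Defensive.
Import Order.TTheory GRing.Theory Num.Theory.
Local Open Scope ring_scope.

Section Defs.
Variable R : realType.

Definition in_open_simplex (n : nat) (Q : 'rV[R]_n) : Prop :=
  (forall j, 0 < Q 0 j) /\ \sum_j Q 0 j = 1.

Definition in_closed_simplex (m : nat) (l : 'rV[R]_m) : Prop :=
  (forall i, 0 <= l 0 i) /\ \sum_i l 0 i = 1.

Definition KL (n : nat) (Q Q' : 'rV[R]_n) : R :=
  \sum_j Q 0 j * ln (Q 0 j / Q' 0 j).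

Definition general_position (m n : nat) (Phi : 'M[R]_(m.+1, n)) : bool :=
  row_free (\matrix_(i < m) (row (lift ord0 i) Phi - row ord0 Phi)).

Definition bary_coord (r n : nat) (S : 'M[R]_(r, n)) (Q : 'rV[R]_n) (l : 'rV[R]_r)
  : Prop := \sum_i l 0 i = 1 /\ Q = l *m S.

Definition in_L (r n : nat) (S : 'M[R]_(r, n)) (Q : 'rV[R]_n) : Prop :=
  (exists l : 'rV[R]_r, bary_coord S Q l) /\ in_open_simplex Q.

Definition equidistant (m n : nat) (Phi : 'M[R]_(m, n)) (Q : 'rV[R]_n) : Prop :=
  in_L Phi Q /\ forall i j, KL (row i Phi) Q = KL (row j Phi) Q.

Definition is_projection (r n : nat) (S : 'M[R]_(r, n)) (Q' Q : 'rV[R]_n) : Prop :=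
  in_L S Q /\ forall Q2, in_L S Q2 -> KL Q Q' <= KL Q2 Q'.

Definition mutual_info (m n : nat) (l : 'rV[R]_m) (Phi : 'M[R]_(m, n)) : R :=
  \sum_i \sum_j l 0 i * Phi i j * ln (Phi i j / (l *m Phi) 0 j).

End Defs.

Definition i1 : 'I_3 := @Ordinal 3 0 isT.
Definition i2 : 'I_3 := @Ordinal 3 1 isT.
Definition i3 : 'I_3 := @Ordinal 3 2 isT.

(* Main.v *)
Require Import Defs.
From HB Require Import structures.
From mathcomp Require Import all_boot all_order all_algebra.
From mathcomp Require Import reals sequences exp.
From mathcomp Require Import ring lra.
Set Implicit Arguments. Unset Strict Implicit. Unset Printing Implicit Defensive.
Import Order.TTheory GRing.Theory Num.Theory.
Local Open Scope ring_scope.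

Section Aux.
Variable R : realType.

Lemma ln_le_sub1 {y : R} : 0 < y -> ln y <= y - 1.
Proof.
move=> hy; have := @le_ln1Dx R (y - 1).
have -> : 1 + (y - 1) = y by ring.
apply; lra.
Qed.

Lemma ln_lt_sub1 {y : R} : 0 < y -> y != 1 -> ln y < y - 1.
Proof.
move=> hy hy1; have h := @expR_gt1Dx R (y - 1).
have h0 : y - 1 != 0 by rewrite subr_eq0.
have := h h0; have -> : 1 + (y - 1) = y by ring. move=> hlt.
have hpy : y \in Num.pos by rewrite posrE.
have hpe : expR (y - 1) \in Num.pos by rewrite posrE expR_gt0.
have := @ltr_ln R y (expR (y - 1)) hpy hpe.
by rewrite expRK => ->.
Qed.

Lemma scal_ge0 (a b : R) : 0 < a -> 0 < b -> 0 <= a * (ln a - ln b) - a + b.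
Proof.
move=> ha hb; have := ln_le_sub1 (divr_gt0 hb ha).
rewrite ln_div ?posrE // => h.
have : a * (ln b - ln a) <= a * (b / a - 1) by rewrite ler_pM2l.
have -> : a * (b / a - 1) = b - a by field; rewrite gt_eqF.
move=> h2; rewrite -[X in 0 <= X]/(a * (ln a - ln b) - a + b); lra.
Qed.

Lemma scal_gt0 (a b : R) : 0 < a -> 0 < b -> a != b -> 0 < a * (ln a - ln b) - a + b.
Proof.
move=> ha hb hab; have := ln_lt_sub1 (divr_gt0 hb ha).
rewrite ln_div ?posrE //.
have -> : (b / a != 1).
  apply: contra hab => /eqP e; apply/eqP.
  by rewrite -[b](divfK (lt0r_neq0 ha)) e mul1r.
move=> /(_ isT) h.
have : a * (ln b - ln a) < a * (b / a - 1) by rewrite ltr_pM2l.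
have -> : a * (b / a - 1) = b - a by field; rewrite gt_eqF.
lra.
Qed.

Lemma scal_up (a b : R) : 0 < a -> 0 < b -> a * (ln a - ln b) <= a * (a - b) / b.
Proof.
move=> ha hb; have := ln_le_sub1 (divr_gt0 ha hb).
rewrite ln_div ?posrE // => h.
have : a * (ln a - ln b) <= a * (a / b - 1) by rewrite ler_pM2l.
suff -> : a * (a / b - 1) = a * (a - b) / b by [].
by field; rewrite gt_eqF.
Qed.

End Aux.
Section Vec.
Variable R : realType.

Definition posv n (P : 'rV[R]_n) := forall j, 0 < P 0 j.

Lemma KLE n (P Q : 'rV[R]_n) : posv P -> posv Q ->
  KL P Q = \sum_j P 0 j * (ln (P 0 j) - ln (Q 0 j)).
Proof.
move=> hP hQ; apply: eq_bigr => j _; by rewrite ln_div ?posrE.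
Qed.

Lemma KL_diff n (P A B : 'rV[R]_n) : posv P -> posv A -> posv B ->
  KL P A = KL P B - \sum_j P 0 j * (ln (A 0 j) - ln (B 0 j)).
Proof.
move=> hP hA hB; rewrite !KLE // -sumrB; apply: eq_bigr => j _; ring.
Qed.

Lemma gibbs n (P Q : 'rV[R]_n) : in_open_simplex P -> in_open_simplex Q ->
  0 <= KL P Q /\ (KL P Q = 0 -> P = Q).
Proof.
move=> [hP sP] [hQ sQ].
have E : KL P Q = \sum_j (P 0 j * (ln (P 0 j) - ln (Q 0 j)) - P 0 j + Q 0 j).
  rewrite big_split /= big_split /= sumrN sP sQ KLE //; ring.
split.
  by rewrite E; apply: sumr_ge0 => j _; apply: scal_ge0.
rewrite E => /psumr_eq0P h.
apply/rowP => j; case: (eqVneq (P 0 j) (Q 0 j)) => // hne.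
have := scal_gt0 (hP j) (hQ j) hne.
by rewrite h ?ltxx // => k _; apply: scal_ge0.
Qed.
End Vec.
Section Lin.
Variable R : realType.

Lemma dot_mul m n (l : 'rV[R]_m) (M : 'M[R]_(m, n)) (f : 'I_n -> R) :
  \sum_j (l *m M) 0 j * f j = \sum_i l 0 i * \sum_j M i j * f j.
Proof.
under eq_bigr do rewrite mxE mulr_suml.
rewrite exchange_big /=; apply: eq_bigr => i _; rewrite mulr_sumr.
by apply: eq_bigr => j _; rewrite mulrA.
Qed.

Lemma sum3 (F : 'I_3 -> R) : \sum_i F i = F i1 + F i2 + F i3.
Proof.
rewrite !big_ord_recl big_ord0 addr0 addrA.
by congr (F _ + F _ + F _); apply/val_inj.
Qed.

Lemma I3_cases (i : 'I_3) : i = i1 \/ i = i2 \/ i = i3.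
Proof.
case: i => [[|[|[|k]]] hi].
- by left; apply/val_inj.
- by right; left; apply/val_inj.
- by right; right; apply/val_inj.
- by [].
Qed.

Lemma sum2 (l : 'rV[R]_(1+1)) : \sum_k l 0 k = l 0 (lshift 1 ord0) + l 0 (rshift 1 ord0).
Proof. by rewrite big_split_ord !big_ord1. Qed.

Lemma colmx2 n (l : 'rV[R]_(1+1)) (A B : 'rV[R]_n) j :
  (l *m col_mx A B) 0 j = l 0 (lshift 1 ord0) * A 0 j + l 0 (rshift 1 ord0) * B 0 j.
Proof. by rewrite mxE big_split_ord !big_ord1 col_mxEu col_mxEd. Qed.

Lemma rowE m n (M : 'M[R]_(m, n)) i j : row i M 0 j = M i j.
Proof. by rewrite mxE. Qed.

Lemma mi_KL m n (l : 'rV[R]_m) (Phi : 'M[R]_(m, n)) :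
  mutual_info l Phi = \sum_i l 0 i * KL (row i Phi) (l *m Phi).
Proof.
apply: eq_bigr => i _; rewrite mulr_sumr; apply: eq_bigr => j _.
by rewrite !rowE mulrA.
Qed.

Lemma pos_mix m n (l : 'rV[R]_m) (Phi : 'M[R]_(m, n)) :
  in_closed_simplex l -> (forall i, in_open_simplex (row i Phi)) ->
  in_open_simplex (l *m Phi).
Proof.
move=> [hl sl] hr; split.
  move=> j; rewrite mxE lt0r.
  have hnn : forall i, true -> 0 <= l 0 i * Phi i j.
    by move=> i _; rewrite mulr_ge0 // ltW // -(rowE Phi) (hr i).1.
  apply/andP; split; last by apply: sumr_ge0.
  apply/eqP => /(psumr_eq0P hnn) h.
  have : \sum_i l 0 i = 0.
    apply: big1 => i _; have := h i isT.
    have hp : 0 < Phi i j by rewrite -(rowE Phi); exact: (hr i).1.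
    move/eqP; rewrite mulf_eq0 (gt_eqF hp) orbF => /eqP; apply.
  by rewrite sl => /eqP; rewrite oner_eq0.
have := dot_mul l Phi (fun _ => 1).
move=> E.
transitivity (\sum_j (l *m Phi) 0 j * 1); first by apply: eq_bigr => j _; rewrite mulr1.
rewrite E -[RHS]sl; apply: eq_bigr => i _.
have h2 := (hr i).2.
transitivity (l 0 i * \sum_j row i Phi 0 j); first by congr (_*_); apply: eq_bigr => j _; rewrite rowE mulr1.
by rewrite h2 mulr1.
Qed.
End Lin.
Section FOC.
Variable R : realType.

Lemma le_sum_term n (F : 'I_n -> R) j : (forall k, 0 <= F k) -> F j <= \sum_k F k.
Proof.
move=> h; rewrite (bigD1 j) //= lerDl; exact: sumr_ge0.
Qed.

Lemma foc n (A B Q0 Q1 : 'rV[R]_n) :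
  in_open_simplex A -> in_open_simplex B -> in_open_simplex Q0 ->
  is_projection (col_mx A B) Q0 Q1 ->
  \sum_j (A 0 j - B 0 j) * (ln (Q1 0 j) - ln (Q0 0 j)) = 0.
Proof.
move=> [pA sA] [pB sB] [pQ0 sQ0] [[[l [sl eQ]] [pQ sQ]] hmin].
set v := fun j => A 0 j - B 0 j.
set s := fun j => ln (Q1 0 j) - ln (Q0 0 j).
set c := \sum_j v j * s j.
have sv : \sum_j v j = 0 by rewrite sumrB sA sB subrr.
have eQ1 : forall j, Q1 0 j = l 0 (lshift 1 ord0) * A 0 j + l 0 (rshift 1 ord0) * B 0 j.
  by move=> j; rewrite eQ colmx2.
have sl2 : l 0 (lshift 1 ord0) + l 0 (rshift 1 ord0) = 1 by rewrite -sum2.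
set K := \sum_j v j ^+ 2 / Q1 0 j.
set M := \sum_j `|v j| / Q1 0 j.
have K0 : 0 <= K by apply: sumr_ge0 => j _; rewrite divr_ge0 ?sqr_ge0 // ltW.
have M0 : 0 <= M by apply: sumr_ge0 => j _; rewrite divr_ge0 ?normr_ge0 // ltW.
have hM : forall j, `|v j| <= M * Q1 0 j.
  move=> j; rewrite -ler_pdivrMr //.
  have h := @le_sum_term n (fun k => `|v k| / Q1 0 k) j.
  apply: h => k; rewrite divr_ge0 ?normr_ge0 //; exact: ltW.
apply/eqP; apply/negPn/negP => hc.
set cm := `|c| * M.
have cm0 : 0 <= cm by rewrite mulr_ge0.
set w := K + cm + 1.
have w0 : 0 < w by rewrite /w; lra.
set u := (2 * w)^-1.
have u0 : 0 < u by rewrite invr_gt0; lra.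
have hu : u * (2 * w) = 1 by rewrite mulVf //; apply: lt0r_neq0; lra.
have hw : 2 * (u * K) + 2 * (u * cm) + 2 * u = 1.
  by rewrite -[RHS]hu /w; ring.
have ucm0 : 0 <= u * cm by rewrite mulr_ge0 // ltW.
have uK0 : 0 <= u * K by rewrite mulr_ge0 // ltW.
have huK : u * K < 1 by lra.
have hucm : u * cm < 1 by lra.
set t := - (c * u).
set l' := \row_(k < 1+1) (l 0 k + t * (if k == lshift 1 ord0 then 1 else -1)) : 'rV[R]_(1+1).
set Qt := l' *m col_mx A B.
have eQt : forall j, Qt 0 j = Q1 0 j + t * v j.
  move=> jj; rewrite /Qt colmx2 !mxE eQ1 /v eqxx.
  have -> : (rshift 1 ord0 == lshift 1 ord0 :> 'I_(1+1)) = false by [].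
  ring.
have pQt : forall j, 0 < Qt 0 j.
  move=> j; rewrite eQt.
  have h1 : `|t * v j| <= u * cm * Q1 0 j.
    rewrite normrM /t normrN normrM (gtr0_norm u0).
    rewrite [X in _ <= X](_ : _ = (`|c| * u) * (M * Q1 0 j)); last by rewrite /cm; ring.
    by apply: ler_wpM2l => //; rewrite mulr_ge0 // ltW.
  have h2 := lerNnormlW h1.
  have h3 : 0 < (1 - u * cm) * Q1 0 j by rewrite mulr_gt0 // subr_gt0.
  lra.
have sQt : \sum_j Qt 0 j = 1.
  rewrite (eq_bigr _ (fun j _ => eQt j)) big_split /= -mulr_sumr sv mulr0 addr0 //.
have Lt : in_L (col_mx A B) Qt.
  split; last by split.
  exists l'; split => //; rewrite sum2 !mxE eqxx.
  have -> : (rshift 1 ord0 == lshift 1 ord0 :> 'I_(1+1)) = false by [].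
  rewrite -sl2; ring.
have hle := hmin Qt Lt.
have hup : KL Qt Q0 <= KL Q1 Q0 + t * c + t * \sum_j v j + t ^+ 2 * K.
  rewrite !KLE // /c /K !mulr_sumr -!big_split /=.
  apply: ler_sum => j _.
  have hq := eQt j.
  have := scal_up (pQt j) (pQ j).
  have e2 : Qt 0 j * (Qt 0 j - Q1 0 j) / Q1 0 j = t * v j + t ^+ 2 * (v j ^+ 2 / Q1 0 j).
    by rewrite hq; field; apply: lt0r_neq0.
  rewrite e2 /s => h.
  have e3 : Qt 0 j * (ln (Qt 0 j) - ln (Q0 0 j)) = Qt 0 j * (ln (Qt 0 j) - ln (Q1 0 j))
     + (Q1 0 j + t * v j) * (ln (Q1 0 j) - ln (Q0 0 j)) by rewrite -hq; ring.
  rewrite e3; lra.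
rewrite sv mulr0 addr0 in hup.
have c2 : 0 < c ^+ 2 by rewrite exprn_even_gt0 //.
have hneg : 0 < c ^+ 2 * u * (1 - u * K) by apply: mulr_gt0; [apply: mulr_gt0|rewrite subr_gt0].
have : t * c + t ^+ 2 * K = - (c ^+ 2 * u * (1 - u * K)) by rewrite /t; ring.
lra.
Qed.
End FOC.
Section Seg.
Variable R : realType.

Lemma KLxx n (x : 'rV[R]_n) : posv x -> KL x x = 0.
Proof. by move=> hx; rewrite KLE //; apply: big1 => j _; rewrite subrr mulr0. Qed.

Lemma seg n (x y Q : 'rV[R]_n) (b : R) :
  in_open_simplex x -> in_open_simplex y -> in_open_simplex Q ->
  (forall j, Q 0 j = x 0 j + b * (y 0 j - x 0 j)) -> b < 0 ->
  KL x Q = KL y Q -> x = y.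
Proof.
move=> hx hy hQ eQ hb E.
have [px _] := hx; have [py _] := hy; have [pQ _] := hQ.
have E1 := KL_diff py pQ px.
have E2 := KL_diff px pQ px.
rewrite KLxx // in E2.
have T : forall j, 0 <= (y 0 j - x 0 j) * (ln (x 0 j) - ln (Q 0 j)).
  move=> j; have := eQ j.
  have hlx : x 0 j \in Num.pos by rewrite posrE.
  have hlQ : Q 0 j \in Num.pos by rewrite posrE.
  case: (lerP 0 (y 0 j - x 0 j)) => hd eq.
    apply: mulr_ge0 => //; rewrite subr_ge0 ler_ln //.
    have : b * (y 0 j - x 0 j) <= 0 by rewrite mulr_le0_ge0 // ltW.
    lra.
  apply: mulr_le0; first exact: ltW.
  rewrite subr_le0 ler_ln //.
  have : 0 <= b * (y 0 j - x 0 j) by rewrite mulr_le0 // ltW.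
  lra.
have S : 0 <= \sum_j (y 0 j - x 0 j) * (ln (x 0 j) - ln (Q 0 j)) by apply: sumr_ge0.
have D : KL y x = - (\sum_j (y 0 j - x 0 j) * (ln (x 0 j) - ln (Q 0 j)))
  + KL y Q - KL x Q.
  rewrite E1 E2.
  have -> : \sum_j (y 0 j - x 0 j) * (ln (x 0 j) - ln (Q 0 j)) =
     \sum_j y 0 j * (ln (x 0 j) - ln (Q 0 j)) - \sum_j x 0 j * (ln (x 0 j) - ln (Q 0 j)).
    by rewrite -sumrB; apply: eq_bigr => j _; ring.
  have -> : \sum_j x 0 j * (ln (Q 0 j) - ln (x 0 j)) = - \sum_j x 0 j * (ln (x 0 j) - ln (Q 0 j)).
    by rewrite -sumrN; apply: eq_bigr => j _; ring.
  have -> : \sum_j y 0 j * (ln (Q 0 j) - ln (x 0 j)) = - \sum_j y 0 j * (ln (x 0 j) - ln (Q 0 j)).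
    by rewrite -sumrN; apply: eq_bigr => j _; ring.
  ring.
have [g0 g1] := gibbs hy hx.
apply/esym/g1.
rewrite E in D.
lra.
Qed.
End Seg.
Unset Implicit Arguments.

Theorem theorem16 (R : realType) (n : nat) (Phi : 'M[R]_(3, n))
  (hrows : forall i, in_open_simplex (row i Phi))
  (hgp : general_position Phi)
  (Q0 : 'rV[R]_n) (hQ0 : equidistant Phi Q0)
  (l0 : 'rV[R]_3) (hl0 : bary_coord Phi Q0 l0)
  (hl1 : l0 0 i1 < 0) (hl2 : 0 <= l0 0 i2) (hl3 : 0 <= l0 0 i3)
  (Q1 : 'rV[R]_n)
  (hQ1 : is_projection (col_mx (row i2 Phi) (row i3 Phi)) Q0 Q1) :
  (* C = max_lambda I(lambda,Phi) = D(P^2 || Q^1) *)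
  (exists l : 'rV[R]_3, in_closed_simplex l /\
      mutual_info l Phi = KL (row i2 Phi) Q1) /\
  (forall l : 'rV[R]_3, in_closed_simplex l ->
      mutual_info l Phi <= KL (row i2 Phi) Q1) /\
  (* Q^* = Q^1 : every capacity-achieving input yields output Q^1 *)
  (forall l : 'rV[R]_3, in_closed_simplex l ->
      mutual_info l Phi = KL (row i2 Phi) Q1 -> l *m Phi = Q1).
Proof.
have posr : forall i, posv (row i Phi) by move=> i; exact: (hrows i).1.
have [[_ hQ0s] heq] := hQ0.
have [pQ0 sQ0] := hQ0s.
have hfoc := foc (hrows i2) (hrows i3) hQ0s hQ1.
have [[[lq [slq eQ1]] hQ1s] _] := hQ1.
have [pQ1 sQ1] := hQ1s.
set s := fun j => ln (Q1 0 j) - ln (Q0 0 j).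
set dot := fun P : 'rV[R]_n => \sum_j P 0 j * s j.
have KLQ1 : forall i, KL (row i Phi) Q1 = KL (row i Phi) Q0 - dot (row i Phi).
  by move=> i; rewrite (KL_diff (posr i) pQ1 pQ0).
have e23 : dot (row i2 Phi) = dot (row i3 Phi).
  apply/eqP; rewrite -subr_eq0; apply/eqP; rewrite -hfoc /dot -sumrB.
  by apply: eq_bigr => j _; rewrite /s; ring.
set a := lq 0 (lshift 1 ord0).
set b := lq 0 (rshift 1 ord0).
have sab : a + b = 1 by rewrite /a /b -sum2.
have eQ1j : forall j, Q1 0 j = a * row i2 Phi 0 j + b * row i3 Phi 0 j.
  by move=> j; rewrite eQ1 colmx2.
have dQ1 : dot Q1 = a * dot (row i2 Phi) + b * dot (row i3 Phi).
  rewrite /dot !mulr_sumr -big_split; apply: eq_bigr => j _; rewrite eQ1j /=; ring.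
have dQ1ge : 0 <= dot Q1.
  have [g _] := gibbs hQ1s hQ0s.
  by rewrite /dot /s -KLE.
have dQ0le : dot Q0 <= 0.
  have [g _] := gibbs hQ0s hQ1s.
  suff -> : dot Q0 = - KL Q0 Q1 by rewrite oppr_le0.
  rewrite KLE // /dot -sumrN; apply: eq_bigr => j _; rewrite /s; ring.
have dQ0 : dot Q0 = l0 0 i1 * dot (row i1 Phi) + l0 0 i2 * dot (row i2 Phi)
    + l0 0 i3 * dot (row i3 Phi).
  rewrite /dot {1}hl0.2 dot_mul sum3.
  by congr (_ * _ + _ * _ + _ * _); apply: eq_bigr => j _; rewrite rowE.
have sl0 : l0 0 i1 + l0 0 i2 + l0 0 i3 = 1 by rewrite -sum3; exact: hl0.1.
have h1 : dot (row i2 Phi) <= dot (row i1 Phi).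
  rewrite e23 in dQ1 dQ0 *.
  move: dQ1ge dQ0le; rewrite dQ1 dQ0 -mulrDl sab mul1r => g1 g2.
  set x := dot (row i1 Phi) in g2 *; set y := dot (row i3 Phi) in g1 g2 *.
  have : l0 0 i1 * (x - y) <= - y by nra.
  nra.
have bound : forall i, KL (row i Phi) Q1 <= KL (row i2 Phi) Q1.
  move=> i; rewrite !KLQ1 (heq i i2).
  case: (I3_cases i) => [->|[->|->]].
  - by rewrite lerD2l lerN2.
  - by [].
  - by rewrite e23.
have golden : forall l : 'rV[R]_3, in_closed_simplex l ->
    mutual_info l Phi = \sum_i l 0 i * KL (row i Phi) Q1 - KL (l *m Phi) Q1.
  move=> l hl.
  have hQs := pos_mix hl hrows.
  have [pQ sQ] := hQs.
  rewrite mi_KL.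
  have -> : KL (l *m Phi) Q1 = \sum_i l 0 i * \sum_j Phi i j * (ln ((l *m Phi) 0 j) - ln (Q1 0 j)).
    by rewrite KLE // dot_mul.
  rewrite -sumrB; apply: eq_bigr => i _.
  rewrite (KL_diff (posr i) pQ pQ1) mulrBr; congr (_ - _ * _).
  by apply: eq_bigr => j _; rewrite rowE.
have upper : forall l : 'rV[R]_3, in_closed_simplex l ->
    mutual_info l Phi <= KL (row i2 Phi) Q1 - KL (l *m Phi) Q1.
  move=> l hl; rewrite golden //; rewrite lerD2r.
  have [hl0' sl'] := hl.
  rewrite -[X in _ <= X]mul1r -sl' mulr_suml.
  by apply: ler_sum => i _; apply: ler_wpM2l => //; apply: bound.
have mk : forall c2 c3 : R, 0 <= c2 -> 0 <= c3 -> c2 + c3 = 1 ->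
    (forall j, Q1 0 j = c2 * row i2 Phi 0 j + c3 * row i3 Phi 0 j) ->
    exists l : 'rV[R]_3, in_closed_simplex l /\
      mutual_info l Phi = KL (row i2 Phi) Q1.
  move=> c2 c3 h2 h3 h23 hQ.
  set l := \row_(i < 3) (if i == i1 then 0 else if i == i2 then c2 else c3).
  have hl : in_closed_simplex l.
    split.
      by move=> i; rewrite mxE; case: (I3_cases i) => [->|[->|->]].
    by rewrite sum3 !mxE /= add0r.
  exists l; split => //.
  have elQ : l *m Phi = Q1.
    apply/rowP => j; rewrite mxE (sum3 (fun i => l 0 i * Phi i j)) !mxE /= hQ !rowE; ring.
  rewrite golden // elQ KLxx // subr0 sum3 !mxE /= mul0r add0r.
  have e3 : KL (row i3 Phi) Q1 = KL (row i2 Phi) Q1 by rewrite !KLQ1 (heq i3 i2) e23.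
  by rewrite e3 -mulrDl h23 mul1r.
split; last split.
- case: (lerP 0 a) => ha; case: (lerP 0 b) => hb.
  + by apply: (mk a b).
  + have e : row i2 Phi = row i3 Phi.
      apply: (seg (hrows i2) (hrows i3) hQ1s _ hb).
        by move=> j; rewrite eQ1j (_ : a = 1 - b); [ring|lra].
      by rewrite !KLQ1 (heq i2 i3) e23.
    apply: (mk 1 0) => //; first by rewrite addr0.
    by move=> j; rewrite eQ1j e (_ : a = 1 - b); [ring|lra].
  + have e : row i3 Phi = row i2 Phi.
      apply: (seg (hrows i3) (hrows i2) hQ1s _ ha).
        by move=> j; rewrite eQ1j (_ : b = 1 - a); [ring|lra].
      by rewrite !KLQ1 (heq i2 i3) e23.
    apply: (mk 1 0) => //; first by rewrite addr0.
    by move=> j; rewrite eQ1j -e (_ : b = 1 - a); [ring|lra].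
  + lra.
- move=> l hl; have := upper l hl.
  have [g _] := gibbs (pos_mix hl hrows) hQ1s.
  lra.
- move=> l hl hI; have := upper l hl.
  have [g g1] := gibbs (pos_mix hl hrows) hQ1s.
  rewrite hI => h; apply: g1; lra.
Qed.
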